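(* Let $\mathbb{K}$ be a non-Archimedean valued field, $G$ a compactly generated topological group, and $E$ a normed $\mathbb{K}[G]$-module. Then every 1-quasicocycle $f : G \to E$ is bounded.
   Context: A non-Archimedean valued field is a field with an absolute value satisfying the ultrametric inequality. A normed $\mathbb{K}$-vector space has a norm satisfying $\|x\|=0$ iff $x=0$, $\|x+y\|\le\max\{\|x\|,\|y\|\}$, $\|\alpha x\|=|\alpha|_\mathbb{K}\|x\|$; a normed $\mathbb{K}[G]$-module is one on which $G$ acts by linear isometries. A 1-quasicocycle is a continuous map $f:G\to E$ such that $\delta^1 f(g,h)=g\cdot f(h)-f(gh)+f(g)$ is bounded on $G\times G$. *)

(* Defs.v *)
From HB Require Import structures.
From mathcomp Require Import all_boot all_order all_algebra.
From mathcomp Require Import all_classical all_reals topology.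
Set Implicit Arguments. Unset Strict Implicit. Unset Printing Implicit Defensive.
Import Order.TTheory GRing.Theory Num.Theory.
Local Open Scope classical_set_scope.
Local Open Scope ring_scope.

Definition nonarch_abs (K : fieldType) (R : realType) (absK : K -> R) : Prop :=
  [/\ forall x : K, 0 <= absK x,
      forall x : K, absK x = 0 <-> x = 0,
      forall x y : K, absK (x * y) = absK x * absK y
    & forall x y : K, absK (x + y) <= Num.max (absK x) (absK y)].

Definition nonarch_norm (K : fieldType) (R : realType) (absK : K -> R)
    (E : lmodType K) (nrm : E -> R) : Prop :=
  [/\ forall x : E, 0 <= nrm x,
      forall x : E, nrm x = 0 <-> x = 0,
      forall x y : E, nrm (x + y) <= Num.max (nrm x) (nrm y)
    & forall (a : K) (x : E), nrm (a *: x) = absK a * nrm x].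

Definition topological_group (G : topologicalType)
    (mul : G -> G -> G) (inv : G -> G) (one : G) : Prop :=
  [/\ forall x y z, mul x (mul y z) = mul (mul x y) z,
      forall x, mul one x = x /\ mul x one = x,
      forall x, mul (inv x) x = one /\ mul x (inv x) = one,
      continuous (fun p : G * G => mul p.1 p.2)
    & continuous inv].

Definition is_subgroup (G : Type) (mul : G -> G -> G) (inv : G -> G) (one : G)
    (S : set G) : Prop :=
  [/\ S one, forall x y, S x -> S y -> S (mul x y) & forall x, S x -> S (inv x)].

Definition generates (G : Type) (mul : G -> G -> G) (inv : G -> G) (one : G)
    (C : set G) : Prop :=
  forall S : set G, is_subgroup mul inv one S -> C `<=` S -> S = setT.

Definition compactly_generated (G : topologicalType)
    (mul : G -> G -> G) (inv : G -> G) (one : G) : Prop :=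
  exists C : set G, compact C /\ generates mul inv one C.

Definition isometric_linear_action (G : Type) (mul : G -> G -> G) (one : G)
    (K : fieldType) (R : realType) (E : lmodType K) (nrm : E -> R)
    (act : G -> E -> E) : Prop :=
  [/\ forall g (a : K) (x y : E), act g (a *: x + y) = a *: act g x + act g y,
      forall g x, nrm (act g x) = nrm x,
      forall x, act one x = x
    & forall g h x, act (mul g h) x = act g (act h x)].

Definition norm_continuous (G : topologicalType) (K : fieldType) (R : realType)
    (E : lmodType K) (nrm : E -> R) (f : G -> E) : Prop :=
  forall (g : G) (eps : R), 0 < eps ->
    exists U : set G, nbhs g U /\ forall h, U h -> nrm (f h - f g) < eps.

Definition quasicocycle (G : topologicalType) (mul : G -> G -> G)
    (K : fieldType) (R : realType) (E : lmodType K) (nrm : E -> R)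
    (act : G -> E -> E) (f : G -> E) : Prop :=
  norm_continuous nrm f /\
  exists M : R, forall g h : G, nrm (act g (f h) - f (mul g h) + f g) <= M.

Definition bounded_map (G : Type) (K : fieldType) (R : realType)
    (E : lmodType K) (nrm : E -> R) (f : G -> E) : Prop :=
  exists M : R, forall g : G, nrm (f g) <= M.

(* Main.v *)
Require Import Defs.
From mathcomp Require Import all_boot all_order all_algebra.
From mathcomp Require Import all_classical all_reals topology.
From mathcomp Require Import ring lra.
Set Implicit Arguments. Unset Strict Implicit. Unset Printing Implicit Defensive.
Import Order.TTheory GRing.Theory Num.Theory.
Local Open Scope classical_set_scope.
Local Open Scope ring_scope.

Theorem proposition8p6
  (R : realType) (K : fieldType) (absK : K -> R)
  (G : topologicalType) (mul : G -> G -> G) (inv : G -> G) (one : G)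
  (E : lmodType K) (nrm : E -> R) (act : G -> E -> E)
  (HK : nonarch_abs absK)
  (HG : topological_group mul inv one)
  (HGcg : compactly_generated mul inv one)
  (HE : nonarch_norm absK nrm)
  (Hact : isometric_linear_action mul one nrm act)
  (f : G -> E) (Hf : quasicocycle mul nrm act f) :
  bounded_map nrm f.
Proof.
case: HK => K0 K1 KM KU.
case: HE => N0 N1 NU NZ.
case: Hact => Alin Aiso Aone Amul.
case: Hf => fc [M HM].
have [Gassoc Gid Ginv _ _] := HG.
case: HGcg => C0 [cC0 genC0].
have a1 : absK 1 = 1.
  have h : absK 1 * absK 1 = absK 1 by rewrite -KM mulr1.
  have nz : absK 1 != 0 by apply/eqP => /K1 /eqP; rewrite oner_eq0.
  by apply: (mulfI nz); rewrite h mulr1.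
have am1 : absK (-1) = 1.
  have h : absK (-1) * absK (-1) = 1 by rewrite -KM mulrNN mulr1 a1.
  have p := K0 (-1).
  have : (absK (-1) - 1) * (absK (-1) + 1) = 0.
    by rewrite mulrBl !mulrDr h !mulr1 mul1r; ring.
  move/eqP; rewrite mulf_eq0 => /orP [/eqP|/eqP] e; first by apply/eqP; rewrite -subr_eq0 e.
  have : 0 < absK (-1) + 1 by rewrite ltr_wpDl.
  by rewrite e ltxx.
have nN : forall x, nrm (- x) = nrm x.
  by move=> x; rewrite -scaleN1r NZ am1 mul1r.
have nB : forall x y, nrm (x - y) <= Num.max (nrm x) (nrm y).
  by move=> x y; rewrite -(nN y); apply: NU.
have M0 : 0 <= M by apply: le_trans (HM one one); apply: N0.
have [B HB] : exists B : R, forall g, C0 g -> nrm (f g) <= B.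
  have := (iffLR (compact_near_coveringP C0) cC0) nat \oo
    (fun n g => nrm (f g) <= n%:R) _.
  case=> [x Cx| ].
  - have [U [nU HU]] := fc x 1 ltr01.
    exists (U, [set n : nat | Num.max (nrm (f x)) 1 <= n%:R]).
      by split => //; apply: nbhs_infty_ger.
    case=> y n [/= Uy Vn].
    apply: le_trans Vn.
    have -> : f y = (f y - f x) + f x by rewrite subrK.
    apply: le_trans (NU _ _) _.
    rewrite ge_max !le_max lexx ?orbT andbT /=.
    by rewrite (ltW (HU _ Uy)) orbT.
  - by move=> n _ Hn; exists n%:R; apply: (Hn n (leqnn n)).
set C := Num.max M B.
have MC : M <= C by rewrite le_max lexx.
have BC : B <= C by rewrite le_max lexx orbT.
have f1 : nrm (f one) <= M.
  by have := HM one one; rewrite Aone (proj1 (Gid one)) subrK.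
have Hmul : forall g h, nrm (f g) <= C -> nrm (f h) <= C -> nrm (f (mul g h)) <= C.
  move=> g h Hg Hh.
  have -> : f (mul g h) = (act g (f h) + f g) - (act g (f h) - f (mul g h) + f g).
    by rewrite opprD opprB addrACA subrr addr0 addrCA subrr addr0.
  apply: le_trans (nB _ _) _; rewrite ge_max (le_trans (HM _ _) MC) andbT.
  by apply: le_trans (NU _ _) _; rewrite ge_max Aiso Hg Hh.
have Hinv : forall g, nrm (f g) <= C -> nrm (f (inv g)) <= C.
  move=> g Hg; rewrite -(Aiso g).
  have [_ e] := Ginv g.
  have -> : act g (f (inv g)) = (act g (f (inv g)) - f (mul g (inv g)) + f g) + f one - f g.
    by rewrite e [_ - f one + f g + f one]addrAC subrK addrK.
  apply: le_trans (nB _ _) _; rewrite ge_max Hg andbT.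
  by apply: le_trans (NU _ _) _; rewrite ge_max (le_trans (HM _ _) MC) (le_trans f1 MC).
have SG : is_subgroup mul inv one [set g | nrm (f g) <= C].
  by split => //=; apply: le_trans f1 MC.
have := genC0 _ SG (fun g Cg => le_trans (HB g Cg) BC).
move=> ST; exists C => g.
have : [set g | nrm (f g) <= C] g by rewrite ST.
by [].
Qed.
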